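(* Let $M\ge1$, let $k\in\{0\}\times\mathbb{Z}_+^M$ and let $m\in\mathbb{Z}^{M+1}$ with $0\leq m\leq\min\{k,\tilde{k}\}$. Then \[ \#\left\{\mathsf{p}\in\mathsf{S}_M^\prime\,|\,(\kappa^\prime(\mathsf{p}),\beta^\prime(\mathsf{p}))=(k,m)\right\}=\binom{k}{m}\binom{\tilde{k}}{m}. \]
   Context: Fix depths $z_{-1}<z_0<\cdots<z_M<z_{M+1}$; $\mathbb{Z}_+$ denotes the nonnegative integers. A transmission scattering sequence is a finite sequence $\mathsf{p}=(\mathsf{p}_0,\ldots,\mathsf{p}_L)$ with $\mathsf{p}_0=z_{-1}$, $\mathsf{p}_L=z_{M+1}$, $\mathsf{p}_i\in\{z_0,\ldots,z_M\}$ for $1\le i\le L-1$, and for every $0\le i\le L-1$ there is $-1\le j\le M$ with $\{\mathsf{p}_i,\mathsf{p}_{i+1}\}=\{z_j,z_{j+1}\}$; $\mathsf{S}_M^\prime$ is the set of these. For $0\le n\le M$, consider the maximal runs of consecutive indices $i$ with $\mathsf{p}_i\in\{z_n,\ldots,z_{M+1}\}$; the last one (containing index $L$) is the trunk run. $k_n$ is the number of non-trunk runs and $m_n$ the number of non-trunk runs of length at least 2; $\kappa^\prime(\mathsf{p})=(k_0,\ldots,k_M)$, $\beta^\prime(\mathsf{p})=(m_0,\ldots,m_M)$. Notation: $\tilde{k}=(k_1,\ldots,k_M,0)$; $\min$ and $\le$ entrywise; $0$ the zero vector; $\binom{x}{y}=\prod_{n=0}^M\binom{x_n}{y_n}$.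 *)

(* Defs.v *)
From mathcomp Require Import all_boot.
Set Implicit Arguments. Unset Strict Implicit. Unset Printing Implicit Defensive.

(* Encoding: depth z_j (-1 <= j <= M+1) is encoded by the natural number j+1,
   so z_{-1} ~ 0, z_0 ~ 1, ..., z_M ~ M+1, z_{M+1} ~ M+2.
   A scattering sequence p = (p_0,...,p_L) is a seq nat of these codes. *)

(* {p_i, p_{i+1}} = {z_j, z_{j+1}} for some j : codes differ by exactly one *)
Definition adj (a b : nat) : bool := (a.+1 == b) || (b.+1 == a).

Definition is_tss (M : nat) (p : seq nat) : bool :=
  match p with
  | [::] => false
  | x :: s =>
      [&& x == 0,
          last x s == M.+2,
          all (fun i => (1 <= nth 0 p i <= M.+1)%N) (iota 1 (size p - 2))
        & path adj x s]
  end.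

Fixpoint runs_acc (cur : nat) (b : seq bool) : seq nat :=
  match b with
  | [::] => if (0 < cur)%N then [:: cur] else [::]
  | true :: b' => runs_acc cur.+1 b'
  | false :: b' => if (0 < cur)%N then cur :: runs_acc 0 b' else runs_acc 0 b'
  end.

Definition runs (b : seq bool) : seq nat := runs_acc 0 b.

(* lengths of the non-trunk runs: drop the run containing the last index
   (which is the last run when the last entry is [true]) *)
Definition nontrunk_runs (b : seq bool) : seq nat :=
  let r := runs b in
  if last false b then take (size r).-1 r else r.

(* indicator of p_i \in {z_n, ..., z_{M+1}}, i.e. code >= n+1 *)
Definition above (n : nat) (p : seq nat) : seq bool := [seq (n.+1 <= x)%N | x <- p].

Definition kappa_n (n : nat) (p : seq nat) : nat := size (nontrunk_runs (above n p)).
Definition beta_n (n : nat) (p : seq nat) : nat :=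
  count (fun l => 2 <= l)%N (nontrunk_runs (above n p)).

(* k tilde = (k_1, ..., k_M, 0) *)
Definition ktilde (M : nat) (k : 'I_M.+1 -> nat) (n : 'I_M.+1) : nat :=
  match (n.+1 < M.+1)%N as b return (n.+1 < M.+1)%N = b -> nat with
  | true => fun h => k (Ordinal h)
  | false => fun _ => 0
  end erefl.

(* Main.v *)
Require Import Defs.
From mathcomp Require Import all_boot zify.
Set Implicit Arguments. Unset Strict Implicit. Unset Printing Implicit Defensive.

Definition NT (cur : nat) (b : seq bool) : seq nat :=
  let r := runs_acc cur b in if last (0 < cur) b then take (size r).-1 r else r.

Lemma runs_acc_nil cur b : last (0 < cur) b -> runs_acc cur b != [::].
Proof.
elim: b cur => [|[] b IH] cur /=.
- by case: cur.
- by move/(IH cur.+1).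
- move=> /(IH 0) h; case: ifP => //.
Qed.

Lemma NT_true cur b : NT cur (true :: b) = NT cur.+1 b.
Proof. by []. Qed.

Lemma NT_false cur b : NT cur (false :: b) = if 0 < cur then cur :: NT 0 b else NT 0 b.
Proof.
rewrite /NT /=; case: cur => [|cur] //=.
case: ifP => // hl; move: (@runs_acc_nil 0 b hl); case: (runs_acc 0 b) => //.
Qed.

Fixpoint tfc (cur : nat) (b : seq bool) : nat :=
  match b with [::] => 0 | true :: b' => tfc cur.+1 b' | false :: b' => (0 < cur) + tfc 0 b' end.
Fixpoint ttfc (cur : nat) (b : seq bool) : nat :=
  match b with [::] => 0 | true :: b' => ttfc cur.+1 b' | false :: b' => (1 < cur) + ttfc 0 b' end.

Lemma NT_nil cur : NT cur [::] = [::].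
Proof. by rewrite /NT /=; case: cur. Qed.

Lemma size_NT cur b : size (NT cur b) = tfc cur b.
Proof.
elim: b cur => [|[] b IH] cur; first by rewrite NT_nil.
- by rewrite NT_true IH.
- by rewrite NT_false /=; case: cur => [|cur] //=; rewrite IH.
Qed.

Lemma count_NT cur b : count (fun l => 2 <= l) (NT cur b) = ttfc cur b.
Proof.
elim: b cur => [|[] b IH] cur; first by rewrite NT_nil.
- by rewrite NT_true IH.
- by rewrite NT_false /=; case: cur => [|cur] //=; rewrite IH.
Qed.

Definition adj' := adj.

Fixpoint dnp (n x : nat) (s : seq nat) : nat :=
  match s with [::] => 0 | y :: s' => ((x == n.+1) && (y == n)) + dnp n y s' end.
Fixpoint ddp (n : nat) (b : bool) (x : nat) (s : seq nat) : nat :=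
  match s with [::] => 0 | y :: s' => [&& b, x == n.+1 & y == n] + ddp n (x == n.+2) y s' end.

Lemma adjE x y : adj x y = (x.+1 == y) || (y.+1 == x).
Proof. by []. Qed.

Lemma tfc_above n s x cur : path adj x s -> (0 < cur) = (n < x) ->
  tfc cur (above n s) = dnp n x s.
Proof.
elim: s x cur => [|y s IH] x cur //= /andP[hxy hp] hc.
case hy: (n < y) => /=.
- rewrite (IH y cur.+1) //.
  suff -> : (x == n.+1) && (y == n) = false by [].
  apply/negbTE/negP => /andP[_ /eqP h]; lia.
- rewrite (IH y 0) ?hy //.
  suff -> : (0 < cur) = (x == n.+1) && (y == n) by [].
  rewrite hc; move: hxy; rewrite adjE => /orP[/eqP h|/eqP h].
  + apply/idP/idP => [h1|/andP[/eqP h1 _]]; lia.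
  + apply/idP/idP => [h1|/andP[/eqP h1 _]]; last lia.
    apply/andP; split; apply/eqP; lia.
Qed.

Lemma ttfc_above n s x cur b : path adj x s -> (0 < cur) = (n < x) ->
  (1 < cur) && (x == n.+1) = b && (x == n.+1) ->
  ttfc cur (above n s) = ddp n b x s.
Proof.
elim: s x cur b => [|y s IH] x cur b //= /andP[hxy hp] hc hb.
move: hxy; rewrite adjE => hxy.
case hy: (n < y) => /=.
- rewrite (IH y cur.+1 (x == n.+2)) //.
  + suff -> : [&& b, x == n.+1 & y == n] = false by [].
    apply/negbTE/negP => /and3P[_ _ /eqP h]; lia.
  + rewrite /= ltnS.
    case/orP: hxy => /eqP hxy.
    * apply/idP/idP; [case/andP=> /eqP h1 /eqP h2|case/andP=> /eqP h1 /eqP h2]; lia.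
    * case: (n =P x) => [h|hx]. 
      -- have h0 : (0 < cur) = false by rewrite hc h ltnn.
         rewrite h0 /=; apply/esym/negbTE/negP => /andP[/eqP h1 /eqP h2]; lia.
      -- have h0 : 0 < cur by rewrite hc; lia.
         rewrite h0 /=; apply/idP/idP => [/eqP h2|/andP[_ /eqP h2]]; [apply/andP; split|]; apply/eqP; lia.
- rewrite (IH y 0 (x == n.+2)) ?hy //; last first.
  + by apply/esym/negbTE/negP => /andP[_ /eqP h]; lia.
  suff -> : (1 < cur) = [&& b, x == n.+1 & y == n] by [].
  case h1: (1 < cur).
  + have hx : n < x by rewrite -hc; lia.
    have e1 : x = n.+1 by case/orP: hxy => /eqP h; lia.
    have e2 : y = n by case/orP: hxy => /eqP h; lia.
    move: hb; rewrite h1 e1 e2 !eqxx /= andbT => <-. by [].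
  + move: hb; rewrite h1 /= => /esym hb.
    by case: b hb => //=; case: (x == n.+1).
Qed.

Lemma kappa_dn n x s : path adj x s -> kappa_n n (x :: s) = dnp n x s.
Proof.
move=> hp; change (size (NT 0 (above n (x :: s))) = dnp n x s).
rewrite size_NT /=; case hx: (n < x) => /=.
- by rewrite (tfc_above hp) // hx.
- by rewrite (tfc_above hp) // hx.
Qed.

Lemma beta_dd n x s : path adj x s -> beta_n n (x :: s) = ddp n false x s.
Proof.
move=> hp; change (count (fun l => 2 <= l) (NT 0 (above n (x :: s))) = ddp n false x s).
rewrite count_NT /=; case hx: (n < x) => /=.
- by rewrite (@ttfc_above n s x 1 false hp) // ?hx.
- by rewrite (@ttfc_above n s x 0 false hp) // hx.
Qed.

Section Ins.
Variable a : nat.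

Definition spk k := flatten (nseq k [:: a.+1; a]).

Fixpoint ins (c : seq nat) (s : seq nat) : seq nat :=
  match s with
  | [::] => [::]
  | y :: s' => if y == a then y :: spk (head 0 c) ++ ins (behead c) s'
               else y :: ins c s'
  end.

Fixpoint ext (c : seq nat) (s : seq nat) : nat :=
  match s with
  | [::] => 0
  | y :: s' => if y == a then ((0 < head 0 c) && (head a.+1 s' == a.-1)) + ext (behead c) s'
               else ext c s'
  end.

Lemma spkS k : spk k.+1 = a.+1 :: a :: spk k.
Proof. by []. Qed.

Lemma last_spk' k : last a (spk k) = a.
Proof. by elim: k. Qed.

Lemma last_spk x k : last x (spk k.+1) = a.
Proof. exact: last_spk'. Qed.

Lemma path_spk k : path adj a (spk k).
Proof. elim: k => [|k IH] //=; rewrite /adj !eqxx /= orbT. exact: IH. Qed.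

Lemma mem_spk x k : x \in spk k -> (x == a) || (x == a.+1).
Proof.
elim: k => [|k IH] //=; rewrite !inE => /orP[->|/orP[->|/IH]]; rewrite ?orbT //.
Qed.

Lemma head_ins w c s : head w (ins c s) = head w s.
Proof. by case: s => [|y s] //=; case: ifP. Qed.

Lemma last_ins x c s : last x (ins c s) = last x s.
Proof.
elim: s x c => [|y s IH] x c //=; case: ifP => [/eqP ->|_] /=; last exact: IH.
by rewrite last_cat last_spk' IH.
Qed.

Lemma path_ins x c s : path adj x (ins c s) = path adj x s.
Proof.
elim: s x c => [|y s IH] x c //=; case: ifP => [/eqP ->|_] /=; last by rewrite IH.
by rewrite cat_path path_spk last_spk' IH.
Qed.

Lemma mem_ins c s x : x \in s -> x \in ins c s.
Proof.
elim: s c => [|y s IH] c //=; rewrite inE => /orP[/eqP->|hx].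
- by case: ifP; rewrite inE eqxx.
- by case: ifP => _; rewrite inE ?mem_cat (IH _ hx) ?orbT.
Qed.

Lemma all_ins (P : pred nat) c s : all P s -> P a.+1 -> all P (ins c s).
Proof.
move=> hs ha; apply/allP => x; elim: s c hs => [|y s IH] c //= /andP[hy hs].
case: ifP => [/eqP ey|_]; rewrite inE => /orP[/eqP->|] //.
- rewrite mem_cat => /orP[/mem_spk/orP[/eqP->|/eqP->]|]; [by rewrite -ey| by []| exact: IH].
- exact: IH.
Qed.

Lemma all_ins_inv (P : pred nat) c s : all P (ins c s) -> all P s.
Proof. move=> /allP h; apply/allP => x /(mem_ins c) /h //. Qed.

Lemma dnp_cat n x s1 s2 : dnp n x (s1 ++ s2) = dnp n x s1 + dnp n (last x s1) s2.
Proof. by elim: s1 x => [|y s1 IH] x //=; rewrite IH addnA. Qed.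

Lemma dnp_rcons (n x : nat) (s : seq nat) (z : nat) : z != n -> dnp n x (rcons s z) = dnp n x s.
Proof. by move=> hz; rewrite -cats1 dnp_cat /= (negbTE hz) andbF /= !addn0. Qed.

Lemma dnp_spk n k : dnp n a (spk k) = k * (n == a).
Proof.
elim: k => [|k IH] //=; rewrite IH.
have -> : (a == n.+1) && (a.+1 == n) = false by apply/negbTE/negP=> /andP[/eqP h1 /eqP h2]; lia.
rewrite eqSS eq_sym; case: (a == n) => /=; lia.
Qed.

Lemma dnp0 n x s : n.+1 \notin x :: s -> dnp n x s = 0.
Proof.
elim: s x => [|y s IH] x //=; rewrite !inE negb_or => /andP[hx hys].
by rewrite eq_sym (negbTE hx) IH.
Qed.

Lemma dnp_ins n x c s :
  dnp n x (ins c s) = dnp n x s + (n == a) * sumn (take (count_mem a s) c).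
Proof.
elim: s x c => [|y s IH] x c /=; first by rewrite take0 muln0.
case: ifP => [/eqP ey|ny] /=.
- rewrite ey dnp_cat dnp_spk last_spk' IH add1n.
  case: c => [|c0 c] /=; try lia.
- by rewrite IH add0n addnA.
Qed.

Fixpoint ddf n (b : bool) (x : nat) (s : seq nat) : bool :=
  match s with [::] => b | y :: s' => ddf n (x == n.+2) y s' end.

Lemma ddp_cat n b x s1 s2 :
  ddp n b x (s1 ++ s2) = ddp n b x s1 + ddp n (ddf n b x s1) (last x s1) s2.
Proof. by elim: s1 b x => [|y s1 IH] b x //=; rewrite IH addnA. Qed.

Lemma ddp_rcons (n : nat) b (x : nat) (s : seq nat) (z : nat) : z != n -> ddp n b x (rcons s z) = ddp n b x s.
Proof. by move=> hz; rewrite -cats1 ddp_cat /= (negbTE hz) !andbF /= !addn0. Qed.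

Lemma ddp0 n b x s : ~~ b -> n.+2 \notin x :: s -> ddp n b x s = 0.
Proof.
elim: s b x => [|y s IH] b x //= hb; rewrite !inE negb_or => /andP[hx hys].
by rewrite (negbTE hb) IH // eq_sym.
Qed.

Lemma ddp_spk n b k : ddp n b a (spk k) = 0.
Proof.
elim: k b => [|k IH] b //=.
have -> : [&& b, a == n.+1 & a.+1 == n] = false.
  by apply/negbTE/negP=> /and3P[_ /eqP h1 /eqP h2]; lia.
have -> : [&& a == n.+2, a.+1 == n.+1 & a == n] = false.
  by apply/negbTE/negP=> /and3P[/eqP h1 _ /eqP h2]; lia.
by rewrite IH.
Qed.

Lemma ddf_spk0 n k : ddf n (a.+1 == n.+2) a (spk k) = (a.+1 == n.+2).
Proof. by elim: k. Qed.
Lemma ddf_spk n b k : ddf n b a (spk k.+1) = (a.+1 == n.+2).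
Proof. by elim: k => [|k IH] //=. Qed.

Lemma ddp_ins n b x c s : all (fun y => y <= a) s -> x <= a ->
  ddp n b x (ins c s) = ddp n b x s + (n.+1 == a) * ext c s.
Proof.
elim: s b x c => [|y s IH] b x c /=; first by rewrite muln0.
case/andP=> hy hs hx; case: ifP => [/eqP ey|ny] /=; last first.
  by rewrite IH // addnA.
rewrite ey ddp_cat ddp_spk add0n last_spk' IH //.
rewrite mulnDr !addnA; congr (_ + _); rewrite -!addnA; congr (_ + _).
case: c => [|[|c0] c] /=; rewrite ?muln0 ?addn0 //.
rewrite (ddf_spk0 n c0).
case: s {IH hs} => [|z s] /=.
- have -> : (a.+1 == a.-1) = false by apply/negbTE/negP => /eqP h; lia.
  by rewrite muln0.
- have -> : [&& x == n.+2, a == n.+1 & z == n] = false.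
    by apply/negbTE/negP=> /and3P[/eqP h1 /eqP h2 _]; lia.
  case: (n.+1 =P a) => [<-|hn] /=.
  + by rewrite !eqxx /= mul1n addnC.
  + have -> : (a.+1 == n.+2) = false by apply/eqP; lia.
    by rewrite mul0n addn0.
Qed.

End Ins.

Section Ins2.
Variable a : nat.
Hypothesis a_pos : 0 < a.

Lemma ext_count s y c : path adj y s -> all (fun t => t <= a) s -> last y s = a -> s != [::] ->
  ext a c s = count (fun t => 0 < t) (take (count_mem a s).-1 c).
Proof.
elim: s y c => [|z s IH] y c //= /andP[hyz hp] /andP[hz hs] hl _.
case: s IH hp hs hl => [|w s] IH hp hs hl.
  move: hl => /= ->; rewrite eqxx /= take0; have -> : (a.+1 == a.-1) = false by apply/eqP; lia.
  by rewrite andbF.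
have hc : 0 < count_mem a (w :: s).
  rewrite -has_count; apply/hasP; exists a; last exact: eqxx.
  by move: hl => /= <-; rewrite mem_last.
case ez: (z == a); [rewrite (IH z (behead c) hp hs hl isT)|rewrite (IH z c hp hs hl isT)].
- have ew : (w == a.-1) = true.
    move/eqP: ez => ez; move: hp => /= /andP[]; rewrite adjE ez => /orP[/eqP h|/eqP h] _; move: hs => /= /andP[hw _]; apply/eqP; lia.
  rewrite ew andbT add1n; move: hc; move: (count_mem a (w :: s)) => [|k] // _ /=.
  by case: c.
- by rewrite add0n.
Qed.

Lemma count_dnp s y : path adj y s -> all (fun t => t <= a) s -> y <= a -> last y s = a ->
  count_mem a (y :: s) = (dnp a.-1 y s).+1.
Proof.
elim: s y => [|z s IH] y /=; first by move=> _ _ _ ->; rewrite eqxx.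
move=> /andP[hyz hp] /andP[hz hs] hy hl.
have := IH z hp hs hz hl; rewrite /= => ->.
case: (y =P a) => [ey|ny] /=.
- have ez : z = a.-1 by move: hyz; rewrite adjE => /orP[/eqP h|/eqP h]; lia.
  by rewrite ey ez prednK // !eqxx.
- by rewrite add0n; have -> : (y == a.-1.+1) = false by apply/eqP; lia.
Qed.

Lemma decomp N q1 y : size q1 <= N -> y <= a -> path adj y q1 -> all (fun t => t <= a.+1) q1 ->
  last y q1 <= a ->
  exists q c, [/\ y :: q1 = ins a c q, all (fun t => t <= a) q & size c = count_mem a q].
Proof.
elim: N q1 y => [|N IH] q1 y.
  case: q1 => // _ hy _ _ _.
  by exists [:: y], (if y == a then [:: 0] else [::]); split => /=; rewrite ?hy //; case: (y == a).
case: q1 => [|y' q2] hsz hy.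
  by move=> _ _ _; exists [:: y], (if y == a then [:: 0] else [::]); split => /=; rewrite ?hy //; case: (y == a).
move=> /= /andP[hyy hp] /andP[hy' ha] hl.
case: (y' =P a.+1) => [ey'|ny'].
- have ey : y = a by move: hyy; rewrite adjE ey' => /orP[/eqP h|/eqP h]; lia.
  case: q2 hsz hp ha hl => [|z q3] hsz hp ha hl; first by move: hl => /=; lia.
  move: hp ha => /= /andP[hyz hp] /andP[hz ha].
  have ez : z = a by move: hyz; rewrite adjE ey' => /orP[/eqP h|/eqP h]; lia.
  rewrite ez in hp hl.
  have [q [c [eq hq hc]]] := IH q3 a ltac:(simpl in hsz; lia) (leqnn a) hp ha hl.
  case: q eq hq hc => [|x q4] // eq hq hc.
  have := congr1 (head 0) eq; rewrite head_ins /= => ex; subst x.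
  move: eq hc; rewrite /= eqxx add1n => [[eq]] hc.
  case: c eq hc => [|c0 c] //= eq [hc].
  exists (a :: q4), (c0.+1 :: c); split => //=.
  + by rewrite eqxx ey ey' ez eq.
  + by rewrite eqxx add1n hc.
- have hy'a : y' <= a by lia.
  have [q [c [eq hq hc]]] := IH q2 y' ltac:(simpl in hsz; lia) hy'a hp ha hl.
  exists (y :: q), (if y == a then 0 :: c else c); split => /=.
  + by case: (y == a); rewrite /= -eq.
  + by rewrite hy hq.
  + by case: (y == a); rewrite /= hc.
Qed.

Lemma spk_inj i j u v : spk a i ++ u = spk a j ++ v -> head 0 u != a.+1 -> head 0 v != a.+1 ->
  i = j /\ u = v.
Proof.
elim: i j => [|i IH] [|j] //=.
- by move=> -> /negP.
- by move=> <- _ /negP.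
- by case=> /IH h /h /[apply] [[-> ->]].
Qed.

Lemma head_ins0 c s : all (fun t => t <= a) s -> head 0 (ins a c s) != a.+1.
Proof. rewrite head_ins; case: s => //= x s /andP[hx _]; apply/eqP; lia. Qed.

Lemma ins_inj s1 s2 c1 c2 : all (fun t => t <= a) s1 -> all (fun t => t <= a) s2 ->
  size c1 = count_mem a s1 -> size c2 = count_mem a s2 -> ins a c1 s1 = ins a c2 s2 ->
  c1 = c2 /\ s1 = s2.
Proof.
elim: s1 s2 c1 c2 => [|x s1 IH] [|y s2] c1 c2.
- by move=> _ _; case: c1 => //; case: c2.
- by move=> _ _ _ _ /=; case: ifP.
- by move=> _ _ _ _ /=; case: ifP.
move=> /andP[hx h1] /andP[hy h2] hc1 hc2 e.
change (is_true (all (fun t => t <= a) s1)) in h1; change (is_true (all (fun t => t <= a) s2)) in h2.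
have := congr1 (head 0) e; rewrite !head_ins /= => exy; subst y.
move: e hc1 hc2 => /=; case: (x =P a) => [->|nx].
- move=> [] e /= hc1 hc2.
  case: c1 e hc1 => [|d1 c1] //=; case: c2 hc2 => [|d2 c2] //= [hc2] e [hc1].
  have [-> e'] := spk_inj e (head_ins0 c1 h1) (head_ins0 c2 h2).
  by have [-> ->] := IH _ _ _ h1 h2 hc1 hc2 e'.
- move=> [] e /= hc1 hc2.
  by have [-> ->] := IH _ _ _ h1 h2 hc1 hc2 e.
Qed.

End Ins2.

Lemma tssR M p : is_tss M p <-> exists q, [/\ p = 0 :: q ++ [:: M.+2],
   all (fun x => 0 < x <= M.+1) q & path adj 0 (q ++ [:: M.+2])].
Proof.
have key : forall (q : seq nat) z, all (fun i => 1 <= nth 0 (0 :: rcons q z) i <= M.+1) (iota 1 (size q))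
   = all (fun x => 0 < x <= M.+1) q.
  move=> q z; have -> : iota 1 (size q) = [seq 1 + i | i <- iota 0 (size q)] by rewrite -iotaDl.
  rewrite all_map.
  rewrite -[in RHS](mkseq_nth 0 q) /mkseq all_map; apply: eq_in_all => i.
  by rewrite mem_iota add0n /= nth_rcons => ->.
split.
- case: p => [|x s] //= /and4P[/eqP -> hl ha hp].
  case/lastP: s hl ha hp => [|q z] /=; first by rewrite eq_sym.
  rewrite last_rcons => /eqP -> ha hp.
  exists q; rewrite -cats1; split => //; last by rewrite cats1.
  by move: ha; rewrite size_rcons !subSS subn0 key.
- case=> q [-> ha hp] /=; rewrite cats1 last_rcons eqxx /=.
  by rewrite size_rcons !subSS subn0 key ha -cats1 hp.
Qed.

Fixpoint comps (n K m : nat) {struct n} : seq (seq nat) :=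
  match n with
  | 0 => if m == 0 then [:: [:: K]] else [::]
  | n'.+1 => [seq 0 :: c | c <- comps n' K m] ++
      (if m is m'.+1 then [seq j.+1 :: c | j <- iota 0 K, c <- comps n' (K - j.+1) m'] else [::])
  end.

Lemma mem_comps n K m c : c \in comps n K m <->
  [/\ size c = n.+1, sumn c = K & count (fun t => 0 < t) (take n c) = m].
Proof.
elim: n K m c => [|n IH] K m c /=.
- case: (m =P 0) => [->|nm]; rewrite ?inE; split.
  + by move/eqP->; split => /=; rewrite ?addn0.
  + by case: c => [|x [|y c]] //= [/= h e _] //; rewrite -e addn0.
  + by [].
  + by case=> _ _; rewrite take0 /= => /esym.
rewrite mem_cat; split.
- case/orP.
  + case/mapP=> c' /IH [h1 h2 h3] ->; split => //=; by rewrite ?h1 ?h2 ?h3.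
  + case: m => [|m] //; case/allpairsPdep=> j [c' [hj /IH [h1 h2 h3] ->]].
    move: hj; rewrite mem_iota add0n => hj.
    split => /=; rewrite ?h1 ?h3 //; rewrite h2; lia.
- case: c => [|t c] /= [h1 h2 h3] //; case: h1 => h1.
  case: t h2 h3 => [|j] h2 h3.
  + apply/orP; left; apply/mapP; exists c => //; apply/IH; split => //; lia.
  + apply/orP; right; case: m h3 => [|m] //= [h3].
    apply/allpairsPdep; exists j, c; split => //.
    * rewrite mem_iota; lia.
    * apply/IH; split => //; lia.
Qed.

Lemma uniq_comps n K m : uniq (comps n K m).
Proof.
elim: n K m => [|n IH] K m /=; first by case: (m == 0).
rewrite cat_uniq map_inj_uniq ?IH //; last by move=> x y [].
apply/and3P; split => //.
- case: m => [|m] //=; apply/hasPn => x /allpairsPdep [j [c [_ _ ->]]].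
  by apply/negP; case/mapP => c' _ [].
- case: m => [|m] //; apply: allpairs_uniq_dep => //; first exact: iota_uniq.
  by move=> [j1 c1] [j2 c2] _ _ /= [-> ->].
Qed.

Lemma sumn_mulr (s : seq nat) k f : sumn [seq k * f j | j <- s] = k * sumn [seq f j | j <- s].
Proof. by elim: s => [|x s IH] /=; rewrite ?muln0 // IH mulnDr. Qed.

Lemma hockey K m : sumn [seq 'C(K - j.+1, m) | j <- iota 0 K] = 'C(K, m.+1).
Proof.
elim: K => [|K IH] //=.
have -> : iota 1 K = [seq 1 + i | i <- iota 0 K] by rewrite -iotaDl.
have -> : [seq 'C(K.+1 - j.+1, m) | j <- [seq 1 + i | i <- iota 0 K]] = [seq 'C(K - j.+1, m) | j <- iota 0 K].
  by rewrite -map_comp; apply: eq_map => j /=; rewrite add1n subSS.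
by rewrite IH subSS subn0 binS addnC.
Qed.

Lemma size_comps n K m : size (comps n K m) = 'C(n, m) * 'C(K, m).
Proof.
elim: n K m => [|n IH] K m /=.
  by rewrite bin0n; case: m => [|m] //=; rewrite bin0.
rewrite size_cat size_map IH; case: m => [|m] /=; first by rewrite !bin0 addn0.
rewrite size_allpairs_dep.
have -> : [seq size (comps n (K - j.+1) m) | j <- iota 0 K] = [seq 'C(n, m) * 'C(K - j.+1, m) | j <- iota 0 K].
  by apply: eq_map => j; rewrite IH.
by rewrite sumn_mulr hockey binS mulnDl.
Qed.

Definition dnS n (p : seq nat) := match p with [::] => 0 | x :: s => dnp n x s end.
Definition ddS n (p : seq nat) := match p with [::] => 0 | x :: s => ddp n false x s end.
Definition Kt M (K : nat -> nat) i := if i < M then K i.+1 else 0.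
Definition strip (p : seq nat) := take (size p - 2) (behead p).

Lemma cat2r (u : seq nat) x y : u ++ [:: x; y] = rcons (rcons u x) y.
Proof. by rewrite -!cats1 -catA. Qed.

Lemma dnS1 n u x : x != n -> dnS n (0 :: u ++ [:: x]) = dnp n 0 u.
Proof. by move=> h; rewrite /= cats1 dnp_rcons. Qed.
Lemma dnS2 n u x y : x != n -> y != n -> dnS n (0 :: u ++ [:: x; y]) = dnp n 0 u.
Proof. by move=> h1 h2; rewrite /= cat2r !dnp_rcons. Qed.
Lemma ddS1 n u x : x != n -> ddS n (0 :: u ++ [:: x]) = ddp n false 0 u.
Proof. by move=> h; rewrite /= cats1 ddp_rcons. Qed.
Lemma ddS2 n u x y : x != n -> y != n -> ddS n (0 :: u ++ [:: x; y]) = ddp n false 0 u.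
Proof. by move=> h1 h2; rewrite /= cat2r !ddp_rcons. Qed.

Lemma strip_eq q z : strip (0 :: q ++ [:: z]) = q.
Proof. by rewrite /strip /= size_cat /= addn1 take_size_cat //; lia. Qed.

Lemma notin_le (q : seq nat) b z : all (fun x => x <= b) q -> b < z -> z \notin 0 :: q.
Proof.
move=> /allP h hz; rewrite inE negb_or; apply/andP; split; first by apply/eqP; lia.
by apply/negP => /h; lia.
Qed.

Lemma tss_last M q : all (fun x => 0 < x <= M.+1) q -> path adj 0 (q ++ [:: M.+2]) ->
  last 0 q = M.+1.
Proof.
move=> hq; rewrite cat_path /= andbT => /andP[_ ha].
have : last 0 q \in 0 :: q by exact: mem_last.
rewrite inE => /orP[/eqP e|/(allP hq) h]; move: ha; rewrite adjE; first by rewrite e.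
by move=> /orP[/eqP e|/eqP e]; lia.
Qed.

Lemma le_all M q : all (fun x => 0 < x <= M) q -> all (fun x => x <= M) q.
Proof. by apply: sub_all => x /andP[]. Qed.

Lemma ne_nat (x n : nat) : n < x -> x != n.
Proof. by move=> h; apply/eqP; lia. Qed.

Lemma main M : forall K Mm : nat -> nat, K 0 = 0 -> exists s : seq (seq nat),
  [/\ uniq s,
      (forall p, p \in s <-> (is_tss M p /\ forall n, n <= M -> dnS n p = K n /\ ddS n p = Mm n))
    & size s = \prod_(i < M.+1) ('C(K i, Mm i) * 'C(Kt M K i, Mm i))].
Proof.
elim: M => [|M IH] K Mm hK0.
- exists (if Mm 0 == 0 then [:: [:: 0; 1; 2]] else [::]); split.
  + by case: (Mm 0 == 0).
  + move=> p; have tss0 : is_tss 0 p <-> p = [:: 0; 1; 2].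
      split; last by move=> ->.
      case/tssR => q [-> hq hp].
      case: q hq hp => [|x [|y q]] //=.
      * rewrite andbT => /andP[hx1 hx2] _; have -> : x = 1 by lia. by [].
      * case/and3P => /andP[hx1 hx2] /andP[hy1 hy2] _ /and3P[_ h _].
        have ex : x = 1 by lia. have ey : y = 1 by lia. by rewrite ex ey in h.
    rewrite tss0; case: (Mm 0 =P 0) => [e|ne]; rewrite ?inE; split.
    * by move/eqP => ->; split => // n; rewrite leqn0 => /eqP ->; rewrite e hK0.
    * by case=> -> _.
    * by [].
    * by case=> -> /(_ 0 (leqnn 0)) [_ /= e]; case: ne.
  + by rewrite big_ord1 /Kt /= hK0 bin0n; case: (Mm 0 == 0).
- set a := M.+1.
  have apos : 0 < a by [].
  pose Mm' := fun n => if n == M then 0 else Mm n.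
  have [s' [us' ms' ss']] := IH K Mm' hK0.
  pose C := comps (K M) (K M.+1) (Mm M).
  pose F := fun p' c => 0 :: ins a c (strip p') ++ [:: a.+1; a.+2].
  have facts : forall p', p' \in s' -> exists q, [/\ p' = 0 :: q ++ [:: a.+1],
      all (fun x => 0 < x <= a) q, path adj 0 q, last 0 q = a
    & forall n, n <= M -> dnp n 0 q = K n /\ ddp n false 0 q = Mm' n].
    move=> p' /ms' [/tssR [q [ep hq hp]] hst]; exists q; split => //.
    * by move: hp; rewrite cat_path => /andP[].
    * exact: tss_last hq hp.
    * move=> n hn; have [h1 h2] := hst n hn.
      have hne : a.+1 != n by apply: ne_nat; rewrite /a; lia.
      by rewrite ep (dnS1 _ hne) in h1; rewrite ep (ddS1 _ hne) in h2.
  have cnt : forall q, all (fun x => 0 < x <= a) q -> path adj 0 q -> last 0 q = a ->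
      count_mem a q = (dnp M 0 q).+1.
    move=> q hq hp hl; have := count_dnp apos hp (le_all hq) (leq0n a) hl.
    by rewrite /= add0n.
  exists (if Mm M.+1 == 0 then [seq F p' c | p' <- s', c <- C] else [::]); split.
  + case: (Mm M.+1 == 0) => //; apply: allpairs_uniq => //; first exact: uniq_comps.
    move=> [p1 c1] [p2 c2] /allpairsP [[p1' c1'] [/= h1 h1' [-> ->]]].
    move=> /allpairsP [[p2' c2'] [/= h2 h2' [-> ->]]].
    have [q1 [e1 hq1 hp1 hl1 hs1]] := facts _ h1.
    have [q2 [e2 hq2 hp2 hl2 hs2]] := facts _ h2.
    move: h1' h2' => /mem_comps [hc1 _ _] /mem_comps [hc2 _ _].
    rewrite /F e1 e2 !strip_eq /= => E; case: E; rewrite !cat2r => E.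
    have e := rcons_injl _ (rcons_injl _ E).
    have := ins_inj apos (le_all hq1) (le_all hq2) _ _ e.
    rewrite hc1 hc2 !cnt // (hs1 M (leqnn M)).1 (hs2 M (leqnn M)).1 => /(_ erefl erefl) [-> ->].
    by [].
  + have hdd : forall p, is_tss M.+1 p -> ddS M.+1 p = 0.
      move=> p /tssR [qz [-> hq hp]].
      have h3 : M.+3 != M.+1 by apply: ne_nat.
      rewrite (ddS1 _ h3) ddp0 //; apply: notin_le (le_all hq) _; lia.
    move=> p; case hMm: (Mm M.+1 == 0); last first.
      split => // [[htss hst]]; move: hMm; rewrite -(hst M.+1 (leqnn _)).2 hdd //.
    split.
    * case/allpairsP => [[p' c] [/= hp' hc ->]].
      have [q [ep hq hpq hl hst]] := facts _ hp'.
      move/mem_comps: hc => [hc1 hc2 hc3].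
      have hqa := le_all hq.
      have hcnt : count_mem a q = size c by rewrite cnt // (hst M (leqnn M)).1 hc1.
      have qne : q != [::] by move: hl; case: q {hq hpq hst hcnt hqa ep} => //=; rewrite /a.
      rewrite /F ep strip_eq; split.
      - apply/tssR; exists (ins a c q ++ [:: a.+1]); split.
        + by rewrite -catA.
        + rewrite all_cat /= andbT ltnSn andbT.
          apply: all_ins; last by rewrite /a; apply/andP; split.
          by apply: sub_all hq => x /andP[h1 h2]; apply/andP; split => //; rewrite /a in h2; lia.
        + by rewrite -catA cat_path path_ins hpq last_ins hl /= /adj !eqxx.
      - move=> n hn.
        have h1 : a.+1 != n by apply: ne_nat; rewrite /a; lia.
        have h2 : a.+2 != n by apply: ne_nat; rewrite /a; lia.
        rewrite (dnS2 _ h1 h2) (ddS2 _ h1 h2) dnp_ins ddp_ins // hcnt take_size.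
        case: (n =P M.+1) => [->|nM].
        + rewrite (dnp0 (notin_le hqa (ltnSn a))) (ddp0 _ (notin_le hqa (_ : a < M.+3))) //.
          have -> : (M.+2 == a) = false by rewrite /a; apply/eqP; lia.
          by rewrite /= hc2 mul1n (eqP hMm).
        + have hnM : n <= M by lia.
          have [hk hm] := hst n hnM.
          rewrite mul0n addn0 hk; split => //.
          case: (n =P M) => [en|nM'].
          + subst n; rewrite /a eqxx mul1n ddp0 //; last by apply: notin_le hqa _; rewrite /a.
            rewrite (ext_count apos c hpq hqa hl qne) hcnt hc1 /=; exact: hc3.
          + have -> : (n.+1 == a) = false by apply/eqP; rewrite /a; lia.
            by rewrite mul0n addn0 hm /Mm'; move/eqP/negbTE: nM' => ->.
    * case=> /tssR [qz [ep hqz hpz]] hst.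
      have hl := tss_last hqz hpz.
      case/lastP: qz ep hqz hpz hl => [|q0 z] ep hqz hpz hl; first by [].
      rewrite last_rcons in hl; subst z.
      move: hqz; rewrite all_rcons => /andP[_ hq0].
      move: hpz; rewrite cat_path rcons_path => /andP[/andP[hp0 hadj] _].
      have hl0 : last 0 q0 = a.
        have : last 0 q0 \in 0 :: q0 by exact: mem_last.
        rewrite inE => /orP[/eqP e|/(allP hq0) h]; move: hadj; rewrite adjE ?e /a => /orP[/eqP h1|/eqP h1]; lia.
      have hq0' : all (fun t => t <= a.+1) q0 by apply: sub_all hq0 => x /andP[].
      have [q'' [c [eq hq'' hc]]] := decomp apos (leqnn (size q0)) (leq0n a) hp0 hq0' (eq_leq hl0).
      case: q'' eq hq'' hc => [|y r] // eq hq'' hc.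
      have ey : y = 0 by have := congr1 (head 1) eq; rewrite head_ins.
      subst y; move: eq; rewrite /a /= => [[eq]].
      move: hq'' hc; rewrite /= add0n => hr hc.
      have hp_r : path adj 0 r by rewrite -(path_ins a 0 c) -eq.
      have hl_r : last 0 r = a by rewrite -(last_ins a 0 c) -eq.
      have hpos_r : all (fun x => 0 < x) r.
        by apply: (all_ins_inv (a := a) (c := c)); rewrite -eq; apply: sub_all hq0 => t /andP[].
      have hqr : all (fun x => 0 < x <= a) r.
        apply/allP => t ht; rewrite (allP hpos_r _ ht); exact: (allP hr _ ht).
      have rne : r != [::] by move: hl_r; case: (r) => //=; rewrite /a.
      have ep' : p = 0 :: ins a c r ++ [:: a.+1; a.+2] by rewrite ep -eq cat_rcons.
      have hcnt : count_mem a r = (dnp M 0 r).+1 := cnt r hqr hp_r hl_r.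
      have hne1 : forall n, n <= M.+1 -> a.+1 != n by move=> n hn; apply: ne_nat; rewrite /a; lia.
      have hne2 : forall n, n <= M.+1 -> a.+2 != n by move=> n hn; apply: ne_nat; rewrite /a; lia.
      have hst' : forall n, n <= M.+1 ->
          dnp n 0 r + (n == a) * sumn (take (count_mem a r) c) = K n /\
          ddp n false 0 r + (n.+1 == a) * ext a c r = Mm n.
        move=> n hn; have [h1 h2] := hst n hn.
        by rewrite ep' (dnS2 _ (hne1 n hn) (hne2 n hn)) (ddS2 _ (hne1 n hn) (hne2 n hn))
          dnp_ins ddp_ins // in h1 h2.
      have hKM : dnp M 0 r = K M.
        have [h _] := hst' M (leqnSn M).
        by move: h; rewrite /a (ltn_eqF (ltnSn M)) mul0n addn0.
      apply/allpairsP; exists (0 :: r ++ [:: a.+1], c); split => /=.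
      - apply/ms'; split.
        + apply/tssR; exists r; split => //.
          by rewrite cat_path hp_r hl_r /= /adj eqxx.
        + move=> n hn; have h1 : a.+1 != n by apply: ne_nat; rewrite /a; lia.
          rewrite (dnS1 _ h1) (ddS1 _ h1).
          have [hk hm] := hst' n (leqW hn).
          move: hk hm; have -> : (n == a) = false by rewrite /a; apply/eqP; lia.
          rewrite mul0n addn0 => -> hm; split => //.
          case: (n =P M) => [en|nM].
          + by subst n; rewrite /Mm' eqxx; apply: ddp0 => //; apply: notin_le hr _; rewrite /a.
          + move: hm; have -> : (n.+1 == a) = false by rewrite /a; apply/eqP; lia.
            by rewrite mul0n addn0 /Mm' => ->; move/eqP/negbTE: nM => ->.
      - apply/mem_comps; split.
        + by rewrite hc hcnt hKM.
        + have [h _] := hst' M.+1 (leqnn _).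
          by move: h; rewrite /a eqxx mul1n -hc take_size dnp0 //; apply: notin_le hr _; rewrite /a.
        + have [_ h] := hst' M (leqnSn M).
          move: h; rewrite /a eqxx mul1n ddp0 //; last by apply: notin_le hr _; rewrite /a.
          by rewrite (ext_count apos c hp_r hr hl_r rne) hcnt hKM.
      - by rewrite ep' /F strip_eq.
  + rewrite big_ord_recr /= /a.
    have -> : Kt M.+1 K M.+1 = 0 by rewrite /Kt ltnn.
    rewrite bin0n; case e: (Mm M.+1 == 0); last by rewrite /= !muln0.
    rewrite (eqP e) bin0 /= !muln1 size_allpairs ss' size_comps big_ord_recr [in RHS]big_ord_recr /=.
    have -> : Mm' M = 0 by rewrite /Mm' eqxx.
    have -> : Kt M K M = 0 by rewrite /Kt ltnn.
    have -> : Kt M.+1 K M = K M.+1 by rewrite /Kt ltnSn.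
    rewrite !bin0 !muln1; congr (_ * _).
    apply: eq_bigr => i _ /=.
    have hi : (nat_of_ord i == M) = false by apply/eqP => h; move: (ltn_ord i); lia.
    by rewrite /Mm' hi /Kt ltn_ord (ltn_trans (ltn_ord i) (ltnSn M)).
Qed.

Lemma ktildeE M (k : 'I_M.+1 -> nat) (n : 'I_M.+1) :
  ktilde k n = if n < M then k (inord n.+1) else 0.
Proof.
rewrite /ktilde.
move: (erefl (n.+1 < M.+1)).
case: {2 3}(n.+1 < M.+1) => h.
- have h' : n < M by rewrite -ltnS.
  rewrite h'; congr k; apply/val_inj; rewrite /= inordK //.
- by rewrite -ltnS h.
Qed.

Theorem lemma4 (M : nat) (k m : 'I_M.+1 -> nat) :
  (1 <= M)%N ->
  k ord0 = 0 ->
  (forall n : 'I_M.+1, m n <= k n /\ m n <= ktilde k n)%N ->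
  exists s : seq (seq nat),
    [/\ uniq s,
        (forall p : seq nat,
            p \in s <->
            (is_tss M p /\
             forall n : 'I_M.+1, kappa_n n p = k n /\ beta_n n p = m n))
      & size s = (\prod_(n < M.+1) 'C(k n, m n)) * (\prod_(n < M.+1) 'C(ktilde k n, m n))].
Proof.
move=> _ hk0 _.
pose K n := k (inord n). pose Mm n := m (inord n).
have hK0 : K 0 = 0.
  by rewrite /K (_ : inord 0 = ord0) //; apply/val_inj; rewrite /= inordK.
have [s [us ms ss]] := @main M K Mm hK0.
exists s; split => //.
- move=> p; rewrite ms; split.
  + case=> ht hst; split => // n.
    have [q [ep _ hp]] := (tssR M p).1 ht.
    have := hst n (ltn_ord n : n < M.+1).
    by rewrite ep kappa_dn // beta_dd // /K /Mm inord_val.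
  + case=> ht hst; split => // n hn.
    have [q [ep _ hp]] := (tssR M p).1 ht.
    have := hst (Ordinal (hn : n < M.+1)).
    rewrite ep kappa_dn // beta_dd // /K /Mm /=.
    by rewrite (_ : inord n = Ordinal (hn : n < M.+1)) //; apply/val_inj; rewrite /= inordK.
- rewrite ss big_split /=; congr (_ * _); apply: eq_bigr => i _.
  + by rewrite /K /Mm inord_val.
  + by rewrite /K /Mm inord_val ktildeE /Kt.
Qed.
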